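(* Let $f:\mathbb{R}^n\times\mathbb{R}^m\to\mathbb{R}^n$ be a polynomial map and let $\boldsymbol\psi:\mathbb{R}^n\to\mathbb{R}^m$ be a ReLU neural network $\boldsymbol\psi(x) = W_N\rho(W_{N-1}\cdots\rho(W_2\rho(W_1x+b_1)+b_2)\cdots+b_{N-1})+b_N$, where $\rho(z)=\max(z,0)$ is applied componentwise, modeled semialgebraically as follows: the lifting variable is $\lambda=(\lambda_1,\dots,\lambda_{N-1})$ (the outputs of the hidden layers), and the constraints $g(x,u,\lambda)\ge0$, $h(x,u,\lambda)=0$ consist of, with $z_1 = W_1x+b_1$ and $z_i = W_i\lambda_{i-1}+b_i$ for $2\le i\le N-1$: $\lambda_i\ge z_i$, $\lambda_i\ge 0$, $\lambda_i\odot(\lambda_i - z_i)=0$ for $i=1,\dots,N-1$ (componentwise, $\odot$ the componentwise product), and $u = W_N\lambda_{N-1}+b_N$. Then the function $x\mapsto \inf\{\|u\|_2+\|\lambda\|_2 \mid g(x,u,\lambda)\ge0,\ h(x,u,\lambda)=0\}$ is bounded on some neighborhood of the origin. Moreover, with \[ \mathbf{K} = \{(x,u,\lambda,x^+,u^+,\lambda^+) \mid x^+ = f(x,u),\ g(x,u,\lambda)\ge 0,\ h(x,u,\lambda)=0,\ g(x^+,u^+,\lambda^+)\ge 0,\ h(x^+,u^+,\lambda^+)=0\}, \] if a continuous function $V$ of $(x,u,\lambda)$ satisfies $V(x^+,u^+,\lambda^+) - V(x,u,\lambda)\le -\|x\|_2^2$ and $V(x,u,\lambda)\ge 0$ for all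 $(x,u,\lambda,x^+,u^+,\lambda^+)\in\mathbf{K}$, then the closed-loop system $x_{k+1}=f(x_k,\boldsymbol\psi(x_k))$ is globally asymptotically stable.
   Context: The closed-loop system is globally asymptotically stable if (i) for all initial conditions $x_0$, $\lim_{k\to\infty}x_k=0$, and (ii) for every $\epsilon>0$ there exists $\delta>0$ such that $\|x_0\|_2\le\delta$ implies $\|x_k\|_2\le\epsilon$ for all $k$. *)

(* Defs.v *)
From HB Require Import structures.
From mathcomp Require Import all_boot all_order all_algebra.
From mathcomp Require Import all_classical all_reals all_analysis.
From mathcomp Require mpoly.
Set Implicit Arguments. Unset Strict Implicit. Unset Printing Implicit Defensive.
Import Order.TTheory GRing.Theory Num.Theory.
Import numFieldNormedType.Exports.
Local Open Scope classical_set_scope.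
Local Open Scope ring_scope.

Section Defs.
Variable R : realType.

Definition l2 (k : nat) (v : 'cV[R]_k) : R := Num.sqrt (\sum_i (v i 0) ^+ 2).

Definition poly_map (n m : nat) (f : 'cV[R]_n -> 'cV[R]_m -> 'cV[R]_n) : Prop :=
  exists P : 'I_n -> mpoly.mpoly (n + m) R,
    forall x u i, f x u i 0 = mpoly.meval (fun k : 'I_(n + m) => col_mx x u k 0) (P i).

Definition relu (k : nat) (v : 'cV[R]_k) : 'cV[R]_k := \col_i Num.max (v i 0) 0.

(* Network architecture (paper's layers i = 1..N, here 0-indexed):
   there are H := N.-1 hidden layers; hidden layer j (j < H) has width w j;
   the input dimension of layer j is din j (n for j = 0, w (j-1) otherwise).
   Paper's W_{j+1}, b_{j+1} (j < H) are W j, b j; paper's W_N, b_N are WN, bN. *)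
Definition din (n : nat) (w : nat -> nat) (j : nat) : nat :=
  if j is k.+1 then w k else n.

Fixpoint fwd (n : nat) (w : nat -> nat)
   (W : forall j : nat, 'M[R]_(w j, din n w j)) (b : forall j : nat, 'cV[R]_(w j))
   (x : 'cV[R]_n) (j : nat) : 'cV[R]_(din n w j) :=
  match j return 'cV[R]_(din n w j) with
  | 0 => x
  | k.+1 => relu (W k *m fwd W b x k + b k)
  end.

Definition psi (n m N : nat) (w : nat -> nat)
   (W : forall j : nat, 'M[R]_(w j, din n w j)) (b : forall j : nat, 'cV[R]_(w j))
   (WN : 'M[R]_(m, din n w N.-1)) (bN : 'cV[R]_m) (x : 'cV[R]_n) : 'cV[R]_m :=
  WN *m fwd W b x N.-1 + bN.

Definition lift_t (N : nat) (w : nat -> nat) := forall j : 'I_N.-1, 'cV[R]_(w j).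

Definition lam_at (N : nat) (w : nat -> nat) (lam : lift_t N w) (k : nat) : 'cV[R]_(w k) :=
  match @idP (k < N.-1)%N with
  | ReflectT hk => lam (Ordinal hk)
  | ReflectF _ => 0
  end.

Definition layer_in (n N : nat) (w : nat -> nat) (x : 'cV[R]_n) (lam : lift_t N w)
   (j : nat) : 'cV[R]_(din n w j) :=
  match j return 'cV[R]_(din n w j) with
  | 0 => x
  | k.+1 => lam_at lam k
  end.

Definition l2lam (N : nat) (w : nat -> nat) (lam : lift_t N w) : R :=
  Num.sqrt (\sum_(j : 'I_N.-1) \sum_i (lam j i 0) ^+ 2).

Definition feasible (n m N : nat) (w : nat -> nat)
   (W : forall j : nat, 'M[R]_(w j, din n w j)) (b : forall j : nat, 'cV[R]_(w j))
   (WN : 'M[R]_(m, din n w N.-1)) (bN : 'cV[R]_m)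
   (x : 'cV[R]_n) (u : 'cV[R]_m) (lam : lift_t N w) : Prop :=
  (forall (j : 'I_N.-1) (r : 'I_(w j)),
     let z := W j *m layer_in x lam j + b j in
     z r 0 <= lam j r 0 /\ 0 <= lam j r 0 /\ lam j r 0 * (lam j r 0 - z r 0) = 0)
  /\ u = WN *m layer_in x lam N.-1 + bN.

Definition dist3 (n m N : nat) (w : nat -> nat)
   (x x' : 'cV[R]_n) (u u' : 'cV[R]_m) (lam lam' : lift_t N w) : R :=
  Num.sqrt (l2 (x - x') ^+ 2 + l2 (u - u') ^+ 2
            + \sum_(j : 'I_N.-1) \sum_i (lam j i 0 - lam' j i 0) ^+ 2).

Definition continuous3 (n m N : nat) (w : nat -> nat)
   (V : 'cV[R]_n -> 'cV[R]_m -> lift_t N w -> R) : Prop :=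
  forall x u lam (eps : R), 0 < eps -> exists2 delta : R, 0 < delta &
    forall x' u' lam', dist3 x x' u u' lam lam' < delta ->
      `|V x' u' lam' - V x u lam| < eps.

Definition traj (n : nat) (F : 'cV[R]_n -> 'cV[R]_n) (x0 : 'cV[R]_n) (k : nat) : 'cV[R]_n :=
  iter k F x0.

Definition GAS (n : nat) (F : 'cV[R]_n -> 'cV[R]_n) : Prop :=
  (forall x0, traj F x0 k @[k --> \oo] --> (0 : 'cV[R]_n))
  /\ (forall eps : R, 0 < eps -> exists2 delta : R, 0 < delta &
        forall x0, l2 x0 <= delta -> forall k, l2 (traj F x0 k) <= eps).

End Defs.

(* Main.v *)
Require Import Defs.
From HB Require Import structures.
From mathcomp Require Import all_boot all_order all_algebra.
From mathcomp Require Import all_classical all_reals all_analysis.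
From mathcomp Require mpoly.
From mathcomp Require Import lra.
Import Order.TTheory GRing.Theory Num.Theory.
Import numFieldNormedType.Exports.
Local Open Scope classical_set_scope.
Local Open Scope ring_scope.

Section Gen.
Variable R : realType.

Lemma cvg_sumr (T : Type) (F : set_system T) (FF : Filter F) (I : Type)
  (r : seq I) (P : pred I) (f : I -> T -> R) (a : I -> R) :
  (forall i, f i x @[x --> F] --> a i) ->
  (\sum_(i <- r | P i) f i x) @[x --> F] --> \sum_(i <- r | P i) a i.
Proof.
move=> h; elim: r => [|i r IH].
  rewrite big_nil; under eq_cvg do rewrite big_nil; exact: cvg_cst.
rewrite big_cons; under eq_cvg do rewrite big_cons.
case: (P i); [exact: cvgD | exact: IH].
Qed.

Lemma cvg_sqrt (T : Type) (F : set_system T) (FF : Filter F) (f : T -> R) (a : R) :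
  f x @[x --> F] --> a -> Num.sqrt (f x) @[x --> F] --> Num.sqrt a.
Proof. by move=> h; exact: (continuous_cvg _ (@sqrt_continuous R a) h). Qed.

Lemma cvg_sq (T : Type) (F : set_system T) (FF : Filter F) (f : T -> R) (a : R) :
  f x @[x --> F] --> a -> (f x ^+ 2) @[x --> F] --> a ^+ 2.
Proof. by move=> h; under eq_cvg do rewrite expr2; rewrite expr2; exact: cvgM. Qed.

Lemma sumsq_cvg0 (T : Type) (F : set_system T) (FF : Filter F) (I : finType)
  (g : I -> T -> R) (a : I -> R) :
  (forall i, g i x @[x --> F] --> a i) ->
  (\sum_i (a i - g i x) ^+ 2) @[x --> F] --> 0.
Proof.
move=> h.
have E : \sum_i (a i - a i) ^+ 2 = 0 :> R by apply: big1 => i _; rewrite subrr expr0n.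
suff H : (\sum_i (a i - g i x) ^+ 2) @[x --> F] --> \sum_i (a i - a i) ^+ 2 by rewrite E in H.
apply: (@cvg_sumr _ _ _ _ _ _ (fun i x => (a i - g i x) ^+ 2)) => i.
apply: cvg_sq; apply: cvgB; [exact: cvg_cst | exact: h].
Qed.
 Lemma l2_ge0 k (v : 'cV[R]_k) : 0 <= l2 v.
Proof. exact: sqrtr_ge0. Qed.

Lemma l2_sq k (v : 'cV[R]_k) : l2 v ^+ 2 = \sum_i (v i 0) ^+ 2.
Proof. by rewrite /l2 sqr_sqrtr // sumr_ge0 // => i _; exact: sqr_ge0. Qed.

Lemma entry_le_l2 k (v : 'cV[R]_k) i : `|v i 0| <= l2 v.
Proof.
rewrite -sqrtr_sqr /l2 ler_sqrt; last by rewrite sumr_ge0 // => j _; exact: sqr_ge0.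
rewrite (bigD1 i) //= lerDl sumr_ge0 // => j _; exact: sqr_ge0.
Qed.

Lemma norm_le_l2 k (v : 'cV[R]_k) : `|v| <= l2 v.
Proof.
rewrite [leLHS]/Num.Def.normr /= mx_normrE.
apply: bigmax_le => [|[i j] _]; first exact: l2_ge0.
by rewrite /= (ord1 j); exact: entry_le_l2.
Qed.

Lemma relu_facts (z : R) :
  z <= Num.max z 0 /\ 0 <= Num.max z 0 /\ Num.max z 0 * (Num.max z 0 - z) = 0.
Proof.
rewrite /Num.Def.maxr. case: ltrP => h.
  by rewrite mul0r lexx ltW.
by rewrite lexx subrr mulr0.
Qed.

End Gen.

Section Net.
Variables (R : realType) (n m N : nat) (w : nat -> nat)
  (W : forall j : nat, 'M[R]_(w j, din n w j)) (b : forall j : nat, 'cV[R]_(w j))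
  (WN : 'M[R]_(m, din n w N.-1)) (bN : 'cV[R]_m).

Definition lamN (x : 'cV[R]_n) : lift_t R N w := fun j => fwd W b x j.+1.
Definition psiN (x : 'cV[R]_n) := @psi R n m N w W b WN bN x.

Lemma lam_atE (lam : lift_t R N w) k (hk : (k < N.-1)%N) : lam_at lam k = lam (Ordinal hk).
Proof.
rewrite /lam_at.
refine (match @idP (k < N.-1)%N as r return
   (match r with ReflectT hk' => lam (Ordinal hk') | ReflectF _ => 0 end = lam (Ordinal hk))
  with ReflectT h => _ | ReflectF h => _ end).
  by rewrite (bool_irrelevance h hk).
by case: (h hk).
Qed.

Lemma layer_in_lamN x (j : nat) : (j <= N.-1)%N -> layer_in x (lamN x) j = fwd W b x j.
Proof. by case: j => [//|k] hk /=; rewrite (lam_atE _ _ hk). Qed.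

Lemma feasible_net x : feasible W b WN bN x (psiN x) (lamN x).
Proof.
split; last by rewrite /psiN /psi layer_in_lamN.
move=> j r /=; rewrite layer_in_lamN; last exact: ltnW.
rewrite /lamN /= /relu !mxE.
exact: relu_facts.
Qed.

Lemma aff_cont k p (M : 'M[R]_(p, din n w k)) (c0 : 'cV[R]_p) i :
  (forall (i : 'I_(din n w k)) (c : 'I_1), continuous (fun x : 'cV[R]_n => fwd W b x k i c)) ->
  continuous (fun x : 'cV[R]_n => (M *m fwd W b x k + c0) i 0).
Proof.
move=> IH.
have -> : (fun x : 'cV[R]_n => (M *m fwd W b x k + c0) i 0) =
   (fun x => \sum_l M i l * fwd W b x k l 0 + c0 i 0).
  by apply/funext => x; rewrite !mxE.
move=> x0.
have H1 : (\sum_l M i l * fwd W b x k l 0) @[x --> x0] --> \sum_l M i l * fwd W b x0 k l 0.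
  apply: (@cvg_sumr R _ (nbhs x0) _ _ _ _ (fun l x => M i l * fwd W b x k l 0)
     (fun l => M i l * fwd W b x0 k l 0)) => l.
  by apply: cvgM; [exact: cvg_cst | exact: IH].
exact: (cvgD H1 (cvg_cst _)).
Qed.

Lemma fwd_cont j (i : 'I_(din n w j)) (c : 'I_1) :
  continuous (fun x : 'cV[R]_n => fwd W b x j i c).
Proof.
elim: j i c => [|k IH] i c /=; first exact: coord_continuous.
have -> : (fun x : 'cV[R]_n => relu (W k *m fwd W b x k + b k) i c) =
   ((fun x => (W k *m fwd W b x k + b k) i 0) \max (fun=> 0)).
  by apply/funext => x; rewrite /relu mxE.
move=> x0.
apply: continuous_max.
  exact: (aff_cont _ _ (W k) (b k) i IH x0).
exact: cst_continuous.
Qed.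

Lemma psi_cont i : continuous (fun x => psiN x i 0).
Proof. by apply: aff_cont => i' c; exact: fwd_cont. Qed.


Lemma lam_cont (j : 'I_N.-1) i : continuous (fun x => lamN x j i 0).
Proof. exact: (fwd_cont j.+1 i 0). Qed.

Lemma l2_sub_sq k (a c : 'cV[R]_k) : l2 (a - c) ^+ 2 = \sum_i (a i 0 - c i 0) ^+ 2.
Proof. by rewrite l2_sq; apply: eq_bigr => i _; rewrite !mxE. Qed.

Lemma dist3_cvg x0 :
  dist3 x0 x (psiN x0) (psiN x) (lamN x0) (lamN x) @[x --> x0] --> 0.
Proof.
have A : l2 (x0 - x) ^+ 2 @[x --> x0] --> (0 : R).
  under eq_cvg do rewrite l2_sub_sq.
  apply: (@sumsq_cvg0 R _ (nbhs x0) _ _ (fun i x => x i 0) (fun i => x0 i 0)) => i.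
  exact: coord_continuous.
have B : l2 (psiN x0 - psiN x) ^+ 2 @[x --> x0] --> (0 : R).
  under eq_cvg do rewrite l2_sub_sq.
  apply: (@sumsq_cvg0 R _ (nbhs x0) _ _ (fun i x => psiN x i 0) (fun i => psiN x0 i 0)) => i.
  exact: psi_cont.
have C : (\sum_(j : 'I_N.-1) \sum_i (lamN x0 j i 0 - lamN x j i 0) ^+ 2) @[x --> x0]
        --> (0 : R).
  suff H : (\sum_(j : 'I_N.-1) \sum_i (lamN x0 j i 0 - lamN x j i 0) ^+ 2) @[x --> x0]
        --> \sum_(j : 'I_N.-1) (0 : R) by rewrite big1_eq in H.
  apply: (@cvg_sumr R _ (nbhs x0) _ _ _ _
    (fun j x => \sum_i (lamN x0 j i 0 - lamN x j i 0) ^+ 2) (fun=> 0)) => j.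
  apply: (@sumsq_cvg0 R _ (nbhs x0) _ _ (fun i x => lamN x j i 0) (fun i => lamN x0 j i 0)) => i.
  exact: lam_cont.
have H : (l2 (x0 - x) ^+ 2 + l2 (psiN x0 - psiN x) ^+ 2
   + \sum_(j : 'I_N.-1) \sum_i (lamN x0 j i 0 - lamN x j i 0) ^+ 2) @[x --> x0]
   --> (0 + 0 + 0 : R) by exact: (cvgD (cvgD A B) C).
rewrite !addr0 in H.
have := @cvg_sqrt R _ (nbhs x0) (nbhs_filter x0) _ _ H; rewrite sqrtr0; exact.
Qed.

Lemma vf_cont V (hV : continuous3 V) x0 :
  V x (psiN x) (lamN x) @[x --> x0] --> V x0 (psiN x0) (lamN x0).
Proof.
apply/(@cvgrPdist_lt _ _ _ (nbhs x0) (nbhs_filter x0)) => e e0.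
have [d d0 hd] := hV x0 (psiN x0) (lamN x0) e e0.
have := @cvgr0_norm_lt _ _ _ _ (nbhs_filter x0) _ (dist3_cvg x0) _ d0.
apply: filterS => x hx.
rewrite distrC; apply: hd.
by rewrite -[X in X < _]ger0_norm // /dist3 sqrtr_ge0.
Qed.

Lemma s_cont x0 :
  (l2 (psiN x) + l2lam (lamN x)) @[x --> x0] --> l2 (psiN x0) + l2lam (lamN x0).
Proof.
have A : (\sum_i psiN x i 0 ^+ 2) @[x --> x0] --> \sum_i psiN x0 i 0 ^+ 2.
  apply: (@cvg_sumr R _ (nbhs x0) _ _ _ _ (fun i x => psiN x i 0 ^+ 2)
     (fun i => psiN x0 i 0 ^+ 2)) => i.
  by apply: cvg_sq; exact: psi_cont.
have B : (\sum_(j : 'I_N.-1) \sum_i lamN x j i 0 ^+ 2) @[x --> x0]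
     --> \sum_(j : 'I_N.-1) \sum_i lamN x0 j i 0 ^+ 2.
  apply: (@cvg_sumr R _ (nbhs x0) _ _ _ _ (fun j x => \sum_i lamN x j i 0 ^+ 2)
     (fun j => \sum_i lamN x0 j i 0 ^+ 2)) => j.
  apply: (@cvg_sumr R _ (nbhs x0) _ _ _ _ (fun i x => lamN x j i 0 ^+ 2)
     (fun i => lamN x0 j i 0 ^+ 2)) => i.
  by apply: cvg_sq; exact: lam_cont.
exact: (cvgD (@cvg_sqrt R _ (nbhs x0) (nbhs_filter x0) _ _ A)
             (@cvg_sqrt R _ (nbhs x0) (nbhs_filter x0) _ _ B)).
Qed.

Lemma main_part1 : exists M : R, \forall x \near (0 : 'cV[R]_n),
      `| inf [set r : R | exists (u : 'cV[R]_m) (lam : lift_t R N w),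
                 feasible W b WN bN x u lam /\ r = l2 u + l2lam lam] | <= M.
Proof.
exists (l2 (psiN 0) + l2lam (lamN 0) + 1).
have := @cvgr_dist_lt _ _ _ _ (nbhs_filter (0 : 'cV[R]_n)) _ _ (s_cont 0) _ ltr01.
apply: filterS => x hx.
set S := [set r | _].
have Ss : S (l2 (psiN x) + l2lam (lamN x)).
  by exists (psiN x), (lamN x); split => //; exact: feasible_net.
have lb : lbound S 0.
  by move=> r [u [lam [_ ->]]]; rewrite addr_ge0 // ?l2_ge0 // /l2lam sqrtr_ge0.
have h1 : 0 <= inf S by apply: lb_le_inf => //; exists (l2 (psiN x) + l2lam (lamN x)).
have h2 : inf S <= l2 (psiN x) + l2lam (lamN x) by apply: ge_inf => //; exists 0.
rewrite ger0_norm //; apply: (le_trans h2).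
by move: hx; rewrite ltr_distlC => /andP[_ /ltW].
Qed.


Lemma main_part2 (f : 'cV[R]_n -> 'cV[R]_m -> 'cV[R]_n)
  (V : 'cV[R]_n -> 'cV[R]_m -> lift_t R N w -> R) :
     continuous3 V ->
     (forall x u lam xp up lamp,
        xp = f x u ->
        feasible W b WN bN x u lam ->
        feasible W b WN bN xp up lamp ->
        V xp up lamp - V x u lam <= - (l2 x) ^+ 2 /\ 0 <= V x u lam) ->
     GAS (fun x => f x (@psi R n m N w W b WN bN x)).
Proof.
move=> hV hdec.
set F := fun x => f x (@psi R n m N w W b WN bN x).
pose vf x := V x (psiN x) (lamN x).
have step : forall x0 k, vf (traj F x0 k.+1) - vf (traj F x0 k) <= - l2 (traj F x0 k) ^+ 2
    /\ 0 <= vf (traj F x0 k).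
  move=> x0 k; apply: hdec; [by rewrite /traj iterS | exact: feasible_net | exact: feasible_net].
have nonincr : forall x0, nonincreasing_seq (fun k => vf (traj F x0 k)).
  move=> x0; apply/nonincreasing_seqP => k.
  have [h _] := step x0 k; have := sqr_ge0 (l2 (traj F x0 k)).
  move: h; simpl; lra.
have lbnd : forall x0, has_lbound (range (fun k => vf (traj F x0 k))).
  by move=> x0; exists 0 => _ [k _ <-]; exact: (step x0 k).2.
pose L x0 := inf (range (fun k => vf (traj F x0 k))).
have cvL : forall x0, (fun k => vf (traj F x0 k)) @ \oo --> L x0.
  by move=> x0; exact: (nonincreasing_cvgn (nonincr x0) (lbnd x0)).
have geL : forall x0 k, L x0 <= vf (traj F x0 k).
  by move=> x0 k; apply: ge_inf; [exact: lbnd | exists k].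
have conv : forall x0, traj F x0 k @[k --> \oo] --> (0 : 'cV[R]_n).
  move=> x0; apply/cvgr0Pnorm_lt => e e0.
  have e20 : 0 < e ^+ 2 by exact: exprn_gt0.
  have := @cvgr_dist_lt _ _ _ _ eventually_filter _ _ (cvL x0) _ e20.
  apply: filterS => k hk.
  apply: (le_lt_trans (@norm_le_l2 R _ _)).
  have [h _] := step x0 k; have := geL x0 k.+1; have := @l2_ge0 R _ (traj F x0 k).
  move: hk h; rewrite ltr_distlC => /andP[hk1 hk2] h.
  nra.
have vcont0 := vf_cont V hV (0 : 'cV[R]_n).
have L0 : forall x0, L x0 = vf 0.
  move=> x0.
  have h2 : (fun k => vf (traj F x0 k)) @ \oo --> vf 0 := cvg_comp _ _ (conv x0) vcont0.
  exact: (cvg_unique (@Rhausdorff R) (cvL x0) h2).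
split; first exact: conv.
move=> eps eps0.
have e20 : 0 < eps ^+ 2 by exact: exprn_gt0.
have := @cvgr_dist_lt _ _ _ _ (nbhs_filter (0 : 'cV[R]_n)) _ _ vcont0 _ e20.
move=> /nbhs_norm0P [d /= d0 hd].
exists (d / 2); first by rewrite divr_gt0.
move=> x0 hx0 k.
have hx : `|x0| < d.
  apply: (le_lt_trans (@norm_le_l2 R _ _)); apply: (le_lt_trans hx0).
  by rewrite ltr_pdivrMr // ltr_pMr // ltr1n.
have hv : `|vf 0 - vf x0| < eps ^+ 2 := hd x0 hx.
move: hv; rewrite ltr_distlC => /andP[hv1 hv2].
have e1 : vf (traj F x0 k) <= vf x0 := nonincr x0 0 k (leq0n k).
have e2 : vf 0 <= vf (traj F x0 k.+1) by rewrite -(L0 x0); exact: geL.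
have e3 := @l2_ge0 R _ (traj F x0 k).
have [h _] := step x0 k.
clearbody vf; clear -hv1 hv2 e1 e2 e3 h eps0.
nra.
Qed.

End Net.

Theorem corollary1 (R : realType) (n m N : nat) (hN : (1 < N)%N)
    (f : 'cV[R]_n -> 'cV[R]_m -> 'cV[R]_n) (hf : poly_map f)
    (w : nat -> nat)
    (W : forall j : nat, 'M[R]_(w j, din n w j)) (b : forall j : nat, 'cV[R]_(w j))
    (WN : 'M[R]_(m, din n w N.-1)) (bN : 'cV[R]_m) :
  (exists M : R, \forall x \near (0 : 'cV[R]_n),
      `| inf [set r : R | exists (u : 'cV[R]_m) (lam : lift_t R N w),
                 feasible W b WN bN x u lam /\ r = l2 u + l2lam lam] | <= M)
  /\
  (forall V : 'cV[R]_n -> 'cV[R]_m -> lift_t R N w -> R,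
     continuous3 V ->
     (forall x u lam xp up lamp,
        xp = f x u ->
        feasible W b WN bN x u lam ->
        feasible W b WN bN xp up lamp ->
        V xp up lamp - V x u lam <= - (l2 x) ^+ 2 /\ 0 <= V x u lam) ->
     GAS (fun x => f x (@psi R n m N w W b WN bN x))).
Proof.
split; first exact: main_part1.
move=> V hV hdec.
exact: (@main_part2 R n m N w W b WN bN f V hV hdec).
Qed.
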